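(* Let $\Phi_1,\Phi_2\in\mathrm{SL}(2,\mathbb C)$ be the monodromy matrices defined below. (a) $\Phi_1$ and $\Phi_2$ have the forms $$\Phi_1=\begin{pmatrix}r_1&p\\ -\bar p&r_2\end{pmatrix},\qquad \Phi_2=\begin{pmatrix}q&ir_3\\ ir_4&\bar q\end{pmatrix}$$ with $p,q\in\mathbb C$ and $r_1,r_2,r_3,r_4\in\mathbb R$. (b) Assume $p\neq0$, $q\neq0$, $r_1\neq r_2$ and $r_3\neq r_4$. Put $$h_1=\frac{2\,\Re(p)}{r_2-r_1},\qquad h_2=\frac{2\,\Im(q)}{r_4-r_3}.$$ - There exist real $\alpha,\beta$ with $\alpha^2-\beta^2=1$ such that, for $S=\begin{pmatrix}\alpha&\beta\\ \beta&\alpha\end{pmatrix}$, both matrices $S^{-1}\Phi_1S$ and $S^{-1}\Phi_2S$ lie in $\mathrm{SU}(2)$, if and only if $h_1=h_2$ and $|h_1|>1$. In that case $\alpha,\beta$ are determined by $\frac{\alpha^2+\beta^2}{2\alpha\beta}=h_1$. - There exist real $\alpha,\beta$ with $-2\alpha\beta=1$ such that, for $S=\begin{pmatrix}\alpha&\beta\\ \alpha&-\beta\end{pmatrix}$, both matrices $S^{-1}\Phi_1S$ and $S^{-1}\Phi_2S$ lie in $\mathrm{SU}(1,1)$, if and only if $h_1=h_2$ and $|h_1|<1$. In that case $\alpha,\beta$ are determined by $\frac{\alpha^2-\beta^2}{\alpha^2+\beta^2}=h_1$. In particular, the closing conditions along $\gamma_1,\gamma_2$ for $f_H$ or $f_S$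 reduce to the single condition $h_1=h_2\in\mathbb R\setminus\{\pm1\}$. Then $|h_1|>1$ gives a surface in $H^3$, and $|h_1|<1$ gives a surface in $S^3_1$.
   Context: Fix an integer $k\ge1$, a real number $\lambda>1$ and a real number $c\ne0$. Let $$\overline M=\Big\{(z,w)\in(\mathbb C\cup\{\infty\})^2 : w^{k+1}=z\Big(\frac{z-\lambda^{-1}}{\lambda-z}\Big)^k\Big\},$$ a compact Riemann surface of genus $k$. Let $M=\overline M\setminus\{(0,0),(\infty,\infty)\}$, with universal cover $\widetilde M$. Set $G=\lambda^{k/(k+1)}w$, $\Omega=c\,\frac{dz}{zw}$, $w_0=\lambda^{-k/(k+1)}$ and $\Lambda=e^{2\pi i/(k+1)}$. Let $\kappa_1(z,w)=(\bar z,\bar w)$, $\kappa_2(z,w)=\big(1/z,\ \lambda^{-2k/(k+1)}/w\big)$ and $\kappa_3(z,w)=(\bar z,\Lambda\bar w)$. Paths and loops in $M$: - $c_1$ goes from $(1,w_0)$ through $\{\Im z<0\}$, with embedded $z$-projection, to a point with real $z\in(0,\lambda^{-1})$. - $c_2$ goes from $(1,w_0)$ through $\{\Im z<0\}$, with embedded $z$-projection, to a point with real $z<0$. - $\gamma_1$ is the concatenation $c_1$, then $\kappa_3\circ c_1^{-1}$, then $\kappa_2\circ\kappa_1\circ\kappa_3\circ c_1$, then $\kappa_1\circ\kappa_2\circ c_1^{-1}$. It is a loop at $(1,w_0)$ whose $z$-projection winds once around $[\lambda^{-1},\lambda]$. - $\gamma_2$ is the concatenation $c_2$, then $\kappa_1\circ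 c_2^{-1}$. It is a loop at $(1,w_0)$ whose $z$-projection winds once around $0$. Let $F:\widetilde M\to\mathrm{SL}(2,\mathbb C)$ solve $$dF\,F^{-1}=\begin{pmatrix}G&-G^2\\ 1&-G\end{pmatrix}\Omega$$ with $F=\mathrm{id}$ at a lift of $(1,w_0)$. Let $\tau_j$ be the deck transformation of $\widetilde M$ corresponding to $\gamma_j$. With $\begin{pmatrix}A_j&B_j\\ C_j&D_j\end{pmatrix}$ the value of $F$ continued along $c_j$ to $c_j(1)$, define $\Phi_1,\Phi_2$ by $F\circ\tau_j=F\Phi_j$. Explicitly, $$\Phi_1=\begin{pmatrix}\bar A_1&-\bar C_1\\ -\bar B_1&\bar D_1\end{pmatrix}\begin{pmatrix}D_1&\Lambda C_1\\ \Lambda^{-1}B_1&A_1\end{pmatrix}\begin{pmatrix}\bar D_1&-\Lambda\bar B_1\\ -\Lambda^{-1}\bar C_1&\bar A_1\end{pmatrix}\begin{pmatrix}A_1&B_1\\ C_1&D_1\end{pmatrix},$$ $$\Phi_2=\begin{pmatrix}\bar D_2&-\bar B_2\\ -\bar C_2&\bar A_2\end{pmatrix}\begin{pmatrix}A_2&B_2\\ C_2&D_2\end{pmatrix}.$$ If the initial condition is replaced by $F=S$ at the base point, the monodromies along $\gamma_j$ become $S^{-1}\Phi_jS$. Surfaces: $H^3=\{aa^*\}$ and $S^3_1=\{a e_3 a^*\}$ for $a\in\mathrm{SL}(2,\mathbb C)$, where $a^*=\bar a^{t}$ and $e_3=\mathrm{diag}(1,-1)$. Put $f_H=FF^*$ (a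 constant mean curvature $1$ immersion into $H^3$) and $f_S=Fe_3F^*$ (a constant mean curvature $1$ face into $S^3_1$). $\mathrm{SU}(1,1)=\{X\in\mathrm{SL}(2,\mathbb C): Xe_3X^*=e_3\}$. *)

(* Defs.v *)
From HB Require Import structures.
From mathcomp Require Import all_boot all_order all_algebra.
Set Implicit Arguments. Unset Strict Implicit. Unset Printing Implicit Defensive.
Import Order.TTheory GRing.Theory Num.Theory.
Local Open Scope ring_scope.

Definition mx2 {R : Type} (a b c d : R) : 'M[R]_2 :=
  \matrix_(i < 2, j < 2)
     if i == 0 :> nat then (if j == 0 :> nat then a else b)
     else (if j == 0 :> nat then c else d).

Section Defs.
Variable C : numClosedFieldType.

Definition adj2 (X : 'M[C]_2) : 'M[C]_2 := (map_mx Num.conj X)^T.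

Definition e3 : 'M[C]_2 := mx2 1 0 0 (-1).

Definition inSU2 (X : 'M[C]_2) : Prop := X *m adj2 X = 1%:M /\ \det X = 1.
Definition inSU11 (X : 'M[C]_2) : Prop := X *m e3 *m adj2 X = e3 /\ \det X = 1.

(* Lambda = e^{2 pi i/(k+1)} = (e^{i pi/(k+1)})^2 ; n.-root (-1) = e^{i pi/n} *)
Definition Lam (k : nat) : C := ((k.+1).-root (-1)) ^+ 2.

(* Monodromies, as given explicitly in terms of the values
   (A_j B_j; C_j D_j) of F continued along c_j. *)
Definition Phi1 (k : nat) (A B Cc D : C) : 'M[C]_2 :=
  let L := Lam k in
  mx2 (A^*) (- Cc^*) (- B^*) (D^*)
  *m mx2 D (L * Cc) (L^-1 * B) A
  *m mx2 (D^*) (- (L * B^*)) (- (L^-1 * Cc^*)) (A^*)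
  *m mx2 A B Cc D.

Definition Phi2 (A B Cc D : C) : 'M[C]_2 :=
  mx2 (D^*) (- B^*) (- Cc^*) (A^*) *m mx2 A B Cc D.

End Defs.

(* Main.v *)
Require Import Defs.
From HB Require Import structures.
From mathcomp Require Import all_boot all_order all_algebra.
From Stdlib Require Import Ring Field.
Import Order.TTheory GRing.Theory Num.Theory.
Local Open Scope ring_scope.

Section Basics.
Variable R : comPzRingType.
Implicit Types a b c d e f g h : R.

Lemma mx2_entry a b c d (i j : 'I_2) :
  mx2 a b c d i j = if i == 0 :> nat then (if j == 0 :> nat then a else b)
     else (if j == 0 :> nat then c else d).
Proof. by rewrite /mx2 mxE. Qed.

Lemma mx2_eq a b c d a' b' c' d' :
  mx2 a b c d = mx2 a' b' c' d' -> [/\ a = a', b = b', c = c' & d = d'].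
Proof.
move=> h.
have e := fun i j => congr1 (fun M : 'M_2 => M i j) h.
have := e 0 0; have := e 0 1; have := e 1 0; have := e 1 1.
by rewrite !mx2_entry /= => -> -> -> ->.
Qed.

Lemma mul_mx2 a b c d e f g h :
  mx2 a b c d *m mx2 e f g h =
  mx2 (a * e + b * g) (a * f + b * h) (c * e + d * g) (c * f + d * h).
Proof.
apply/matrixP => i j; rewrite !mxE !big_ord_recl big_ord0 !mx2_entry addr0.
by case: i => [[|[|//]] ?]; case: j => [[|[|//]] ?].
Qed.

Lemma det_mx2 a b c d : \det (mx2 a b c d) = a * d - b * c.
Proof.
rewrite (expand_det_row _ 0) !big_ord_recl big_ord0 addr0 /cofactor !det_mx11.
rewrite !mxE /=.
by rewrite expr0 mul1r expr1 mulN1r mulrN.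
Qed.

Lemma mx2_1 : (1%:M : 'M[R]_2) = mx2 1 0 0 1.
Proof.
apply/matrixP => i j; rewrite !mxE.
by case: i => [[|[|//]] ?]; case: j => [[|[|//]] ?].
Qed.
End Basics.

Lemma adj2_mx2 (C : numClosedFieldType) (a b c d : C) :
  adj2 (mx2 a b c d) = mx2 a^* c^* b^* d^*.
Proof.
apply/matrixP => i j; rewrite /adj2 !mxE.
by case: i => [[|[|//]] ?]; case: j => [[|[|//]] ?].
Qed.

Section CF.
Variable C : numClosedFieldType.
Definition Cadd (x y : C) : C := x + y.
Definition Cmul (x y : C) : C := x * y.
Definition Copp (x : C) : C := - x.
Definition Cinv (x : C) : C := x^-1.
Definition Csub (x y : C) : C := x - y.
Definition Cdiv (x y : C) : C := x / y.
Definition C0 : C := 0.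
Definition C1 : C := 1.
Lemma CRth : @ring_theory C C0 C1 Cadd Cmul Csub Copp eq.
Proof. split; rewrite /Cadd /Cmul /Csub /Copp /C0 /C1; [exact: add0r|exact: addrC|exact: addrA|exact: mul1r|exact: mulrC|exact: mulrA|exact: mulrDl|by []|exact: subrr]. Qed.
Lemma CFth : @field_theory C C0 C1 Cadd Cmul Csub Copp Cdiv Cinv eq.
Proof. split. exact: CRth. apply/eqP; exact: oner_neq0. by move=> ? ?. move=> p hp; apply: mulVf; exact/eqP. Qed.
Add Field Cfield : CFth.
Lemma C1E : (1 : C) = C1. Proof. by []. Qed.
Lemma C0E : (0 : C) = C0. Proof. by []. Qed.
Lemma CaddE (x y : C) : x + y = Cadd x y. Proof. by []. Qed.
Lemma CmulE (x y : C) : x * y = Cmul x y. Proof. by []. Qed.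
Lemma CoppE (x : C) : - x = Copp x. Proof. by []. Qed.
Lemma CinvE (x : C) : x^-1 = Cinv x. Proof. by []. Qed.
Ltac cfold := rewrite ?mulr2n ?expr2; rewrite ?CinvE ?CoppE ?CmulE ?CaddE ?C1E ?C0E;
  match goal with |- @eq _ ?x ?y => change (@eq (Num.ClosedField.sort C) x y) end.

Lemma eq_via (x y u v : C) : x - y = u - v -> u = v -> x = y.
Proof. by move=> h e; apply/eqP; rewrite -subr_eq0 h e subrr. Qed.

Lemma realC {x : C} : x \is Num.real -> x^* = x.
Proof. by rewrite CrealE => /eqP. Qed.

Lemma conjN (x : C) : (- x)^* = - x^*. Proof. exact: rmorphN. Qed.
Lemma conjD (x y : C) : (x + y)^* = x^* + y^*. Proof. exact: rmorphD. Qed.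
Lemma conjB (x y : C) : (x - y)^* = x^* - y^*. Proof. exact: rmorphB. Qed.
Lemma conjM (x y : C) : (x * y)^* = x^* * y^*. Proof. exact: rmorphM. Qed.
Lemma conjV (x : C) : (x^-1)^* = (x^*)^-1. Proof. exact: fmorphV. Qed.

Lemma adj2_mul (X Y : 'M[C]_2) : adj2 (X *m Y) = adj2 Y *m adj2 X.
Proof. by rewrite /adj2 map_mxM trmx_mul. Qed.

Lemma adj2_1 : adj2 (1%:M : 'M[C]_2) = 1%:M.
Proof. by rewrite mx2_1 adj2_mx2 rmorph1 rmorph0 -mx2_1. Qed.

Lemma conj_core (S M G : 'M[C]_2) : S \in unitmx ->
  (invmx S *m M *m adj2 (invmx S) = G <-> M = S *m G *m adj2 S).
Proof.
move=> hS.
have h1 : S *m invmx S = 1%:M by rewrite mulmxV.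
have h2 : invmx S *m S = 1%:M by rewrite mulVmx.
have h3 : adj2 (invmx S) *m adj2 S = 1%:M by rewrite -adj2_mul h1 adj2_1.
have h4 : adj2 S *m adj2 (invmx S) = 1%:M by rewrite -adj2_mul h2 adj2_1.
split => [<-|->].
  by rewrite !mulmxA h1 mul1mx -!mulmxA h3 mulmx1.
by rewrite !mulmxA h2 mul1mx -!mulmxA h4 mulmx1.
Qed.

Lemma su_core (S G P : 'M[C]_2) : S \in unitmx ->
  ((invmx S *m P *m S) *m G *m adj2 (invmx S *m P *m S) = G <->
   P *m (S *m G *m adj2 S) *m adj2 P = S *m G *m adj2 S).
Proof.
move=> hS.
have -> : (invmx S *m P *m S) *m G *m adj2 (invmx S *m P *m S) =
   invmx S *m (P *m (S *m G *m adj2 S) *m adj2 P) *m adj2 (invmx S).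
  by rewrite !adj2_mul !mulmxA.
exact: conj_core.
Qed.

Lemma psi_iff (P Q H : 'M[C]_2) : adj2 P *m Q = 1%:M -> Q *m adj2 P = 1%:M ->
  (P *m H *m adj2 P = H <-> P *m H = H *m Q).
Proof.
move=> h1 h2; split => h.
  by rewrite -[in RHS]h -[RHS]mulmxA h1 mulmx1.
by rewrite h -[LHS]mulmxA h2 mulmx1.
Qed.

Lemma det_conj (S P : 'M[C]_2) : S \in unitmx -> \det (invmx S *m P *m S) = \det P.
Proof.
by move=> hS; rewrite !det_mulmx mulrC mulrA -det_mulmx mulmxV // det1 mul1r.
Qed.

Lemma cond1 (r1 r2 p a b : C) : r1 \is Num.real -> r2 \is Num.real ->
  r1 * r2 + p * p^* = 1 ->
  (mx2 r1 p (- p^*) r2 *m mx2 a b b a *m adj2 (mx2 r1 p (- p^*) r2) = mx2 a b b a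
   <-> a * (r2 - r1) = b * (p + p^*)).
Proof.
move=> h1 h2 hd.
have hadj : adj2 (mx2 r1 p (- p^*) r2) = mx2 r1 (- p) (p^*) r2.
  by rewrite adj2_mx2 conjN conjCK (realC h1) (realC h2).
have e1 : adj2 (mx2 r1 p (- p^*) r2) *m mx2 r2 p (- p^*) r1 = 1%:M.
  rewrite hadj mul_mx2 mx2_1; congr mx2; rewrite ?(esym hd); cfold; ring.
have e2 : mx2 r2 p (- p^*) r1 *m adj2 (mx2 r1 p (- p^*) r2) = 1%:M.
  rewrite hadj mul_mx2 mx2_1; congr mx2; rewrite ?(esym hd); cfold; ring.
rewrite (psi_iff _ _ _ e1 e2) !mul_mx2; split.
  case/mx2_eq => e _ _ _.
  apply: (@eq_via _ _ (a * r2 + b * - p^*) (r1 * a + p * b)); last by rewrite e.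
  cfold; ring.
move=> K; congr mx2.
- apply: (@eq_via _ _ (b * (p + p^*)) (a * (r2 - r1))); last by rewrite K.
  cfold; ring.
- cfold; ring.
- cfold; ring.
- apply: (@eq_via _ _ (a * (r2 - r1)) (b * (p + p^*))); last by rewrite K.
  cfold; ring.
Qed.

Lemma cond2 (q s3 s4 a b : C) : s3^* = - s3 -> s4^* = - s4 ->
  q * q^* - s3 * s4 = 1 ->
  (mx2 q s3 s4 q^* *m mx2 a b b a *m adj2 (mx2 q s3 s4 q^*) = mx2 a b b a
   <-> b * (q - q^*) = a * (s4 - s3)).
Proof.
move=> h3 h4 hd.
have hadj : adj2 (mx2 q s3 s4 q^*) = mx2 q^* (- s4) (- s3) q.
  by rewrite adj2_mx2 conjCK h3 h4.
have e1 : adj2 (mx2 q s3 s4 q^*) *m mx2 q s4 s3 q^* = 1%:M.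
  rewrite hadj mul_mx2 mx2_1; congr mx2; rewrite ?(esym hd); cfold; ring.
have e2 : mx2 q s4 s3 q^* *m adj2 (mx2 q s3 s4 q^*) = 1%:M.
  rewrite hadj mul_mx2 mx2_1; congr mx2; rewrite ?(esym hd); cfold; ring.
rewrite (psi_iff _ _ _ e1 e2) !mul_mx2; split.
  case/mx2_eq => _ e _ _.
  apply: (@eq_via _ _ (q * b + s3 * a) (a * s4 + b * q^*)); last by rewrite e.
  cfold; ring.
move=> K; congr mx2.
- cfold; ring.
- apply: (@eq_via _ _ (b * (q - q^*)) (a * (s4 - s3))); last by rewrite K.
  cfold; ring.
- apply: (@eq_via _ _ (a * (s4 - s3)) (b * (q - q^*))); last by rewrite K.
  cfold; ring.
- cfold; ring.
Qed.

Lemma su2_iff (al be : C) (P : 'M[C]_2) : al \is Num.real -> be \is Num.real ->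
  al ^+ 2 - be ^+ 2 = 1 -> \det P = 1 ->
  (inSU2 (invmx (mx2 al be be al) *m P *m mx2 al be be al) <->
   P *m mx2 (al ^+ 2 + be ^+ 2) (2 * al * be) (2 * al * be) (al ^+ 2 + be ^+ 2) *m adj2 P
   = mx2 (al ^+ 2 + be ^+ 2) (2 * al * be) (2 * al * be) (al ^+ 2 + be ^+ 2)).
Proof.
move=> ha hb h1 hP.
have hS : mx2 al be be al \in unitmx.
  rewrite unitmxE det_mx2 unitfE -!expr2 h1; exact: oner_neq0.
have hH : mx2 al be be al *m 1%:M *m adj2 (mx2 al be be al) =
   mx2 (al ^+ 2 + be ^+ 2) (2 * al * be) (2 * al * be) (al ^+ 2 + be ^+ 2).
  by rewrite mulmx1 adj2_mx2 (realC ha) (realC hb) mul_mx2; congr mx2; cfold; ring.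
rewrite /inSU2 det_conj // hP; split.
  case=> h _; rewrite -hH; apply/(su_core _ _ _ hS); by rewrite mulmx1.
move=> h; split => //.
have := (su_core _ 1%:M P hS).2; rewrite hH mulmx1; exact.
Qed.

Lemma su11_iff (al be : C) (P : 'M[C]_2) : al \is Num.real -> be \is Num.real ->
  - (2 * al * be) = 1 -> \det P = 1 ->
  (inSU11 (invmx (mx2 al be al (- be)) *m P *m mx2 al be al (- be)) <->
   P *m mx2 (al ^+ 2 - be ^+ 2) (al ^+ 2 + be ^+ 2) (al ^+ 2 + be ^+ 2) (al ^+ 2 - be ^+ 2) *m adj2 P
   = mx2 (al ^+ 2 - be ^+ 2) (al ^+ 2 + be ^+ 2) (al ^+ 2 + be ^+ 2) (al ^+ 2 - be ^+ 2)).
Proof.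
move=> ha hb h1 hP.
have hS : mx2 al be al (- be) \in unitmx.
  rewrite unitmxE det_mx2 unitfE.
  have -> : al * - be - be * al = - (2 * al * be) by cfold; ring.
  rewrite h1; exact: oner_neq0.
have hH : mx2 al be al (- be) *m e3 C *m adj2 (mx2 al be al (- be)) =
   mx2 (al ^+ 2 - be ^+ 2) (al ^+ 2 + be ^+ 2) (al ^+ 2 + be ^+ 2) (al ^+ 2 - be ^+ 2).
  by rewrite /e3 adj2_mx2 conjN (realC ha) (realC hb) !mul_mx2; congr mx2; cfold; ring.
rewrite /inSU11 det_conj // hP; split.
  case=> h _; rewrite -hH; exact/(su_core _ _ _ hS).
move=> h; split => //.
have := (su_core _ (e3 C) P hS).2; rewrite hH; exact.
Qed.

Lemma two_neq0 : Cadd C1 C1 <> C0.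
Proof. rewrite -CaddE -C1E -C0E -mulr2n; apply/eqP; by rewrite pnatr_eq0. Qed.

Lemma phi1_gen (L A B Cc D : C) : L != 0 -> L^* = L^-1 ->
  exists p r1 r2, [/\ r1 \is Num.real, r2 \is Num.real &
  mx2 (A^*) (- Cc^*) (- B^*) (D^*)
  *m mx2 D (L * Cc) (L^-1 * B) A
  *m mx2 (D^*) (- (L * B^*)) (- (L^-1 * Cc^*)) (A^*)
  *m mx2 A B Cc D = mx2 r1 p (- p^*) r2].
Proof.
move=> /eqP hL0 hL.
rewrite !mul_mx2.
eexists _, _, _; split; last first.
  congr mx2.
  rewrite !(conjD, conjN, conjM, conjV, conjCK, hL, invrK).
  cfold; field; exact: hL0.
- rewrite CrealE; apply/eqP.
  rewrite !(conjD, conjN, conjM, conjV, conjCK, hL, invrK).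
  cfold; field; exact: hL0.
- rewrite CrealE; apply/eqP.
  rewrite !(conjD, conjN, conjM, conjV, conjCK, hL, invrK).
  cfold; field; exact: hL0.
Qed.

Lemma Lam_prop k : Lam C k != 0 /\ (Lam C k)^* = (Lam C k)^-1.
Proof.
have hn : `|Lam C k| = 1 by rewrite /Lam normrX norm_rootC normrN normr1 rootC1 // expr1n.
have hm : Lam C k * (Lam C k)^* = 1 by rewrite -normCK hn expr1n.
have h0 : Lam C k != 0.
  apply/eqP => e; move: hm; rewrite e mul0r => /eqP; rewrite eq_sym oner_eq0 //.
split => //.
by rewrite -[_^*](mulKf h0) hm mulr1.
Qed.

Lemma phi1_form k (A B Cc D : C) : exists p r1 r2, [/\ r1 \is Num.real, r2 \is Num.real &
  Phi1 k A B Cc D = mx2 r1 p (- p^*) r2].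
Proof. by case: (Lam_prop k) => h0 h1; exact: (phi1_gen (Lam C k) A B Cc D h0 h1). Qed.

Lemma iiK (x : C) : 'i * (- 'i * x) = x.
Proof. by rewrite mulNr mulrN mulrA -expr2 sqrCi mulN1r opprK. Qed.

Lemma phi2_form (A B Cc D : C) : exists q r3 r4, [/\ r3 \is Num.real, r4 \is Num.real &
  Phi2 A B Cc D = mx2 q ('i * r3) ('i * r4) q^*].
Proof.
rewrite /Phi2 mul_mx2.
exists (D^* * A + - B^* * Cc), (- 'i * (D^* * B + - B^* * D)),
  (- 'i * (- Cc^* * A + A^* * Cc)); split.
- rewrite CrealE; apply/eqP; rewrite !(conjD, conjN, conjM, conjCK) conjCi; cfold; ring.
- rewrite CrealE; apply/eqP; rewrite !(conjD, conjN, conjM, conjCK) conjCi; cfold; ring.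
- rewrite !iiK; congr mx2.
  rewrite !(conjD, conjN, conjM, conjCK); cfold; ring.
Qed.

Lemma det_phi1 k (A B Cc D : C) : A * D - B * Cc = 1 -> \det (Phi1 k A B Cc D) = 1.
Proof.
move=> hd; case: (Lam_prop k) => /eqP h0 h1.
have hc : (A * D - B * Cc)^* = 1 by rewrite hd rmorph1.
rewrite /Phi1 !det_mulmx !det_mx2.
have -> : A^* * D^* - - Cc^* * - B^* = 1.
  apply: (@eq_via _ _ ((A * D - B * Cc)^*) 1); last exact: hc.
  rewrite !(conjB, conjM); cfold; ring.
have -> : D * A - Lam C k * Cc * ((Lam C k)^-1 * B) = 1.
  apply: (@eq_via _ _ (A * D - B * Cc) 1); last exact: hd.
  cfold; field; exact: h0.
have -> : D^* * A^* - - (Lam C k * B^*) * - ((Lam C k)^-1 * Cc^*) = 1.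
  apply: (@eq_via _ _ ((A * D - B * Cc)^*) 1); last exact: hc.
  rewrite !(conjB, conjM); cfold; field; exact: h0.
by rewrite hd !mul1r.
Qed.

Lemma det_phi2 (A B Cc D : C) : A * D - B * Cc = 1 -> \det (Phi2 A B Cc D) = 1.
Proof.
move=> hd.
have hc : (A * D - B * Cc)^* = 1 by rewrite hd rmorph1.
rewrite /Phi2 !det_mulmx !det_mx2 hd mulr1.
apply: (@eq_via _ _ ((A * D - B * Cc)^*) 1); last exact: hc.
rewrite !(conjB, conjM); cfold; ring.
Qed.

Ltac fside := rewrite -?CaddE -?CmulE -?CoppE -?CinvE -?C1E -?C0E ?mulr1n -?expr2; apply/eqP.

Lemma i_neq0 : ('i : C) != 0.
Proof. apply/eqP => e; have := sqrCi C; rewrite e expr0n /= => /eqP; rewrite eq_sym oppr_eq0 oner_eq0. by []. Qed.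

Lemma ii2 (x : C) : 'i * ('i * x) = - x.
Proof. by rewrite mulrA -expr2 sqrCi mulN1r. Qed.

Lemma hK (n d a b : C) : d != 0 -> b != 0 -> (a * d = b * n <-> n / d = a / b).
Proof.
move=> hd hb; split => h.
  apply/eqP; rewrite eqr_div //; apply/eqP; by rewrite h mulrC.
move/eqP: h; rewrite eqr_div // => /eqP h; by rewrite -h mulrC.
Qed.

Lemma h1E (p r1 r2 : C) : 2 * 'Re p / (r2 - r1) = (p + p^*) / (r2 - r1).
Proof. by rewrite ReE [2 * _]mulrC divfK // pnatr_eq0. Qed.

Lemma h2E (q r3 r4 : C) : 2 * 'Im q / (r4 - r3) = 'i * (q^* - q) / (r4 - r3).
Proof. by rewrite ImE [2 * _]mulrC divfK // pnatr_eq0. Qed.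

Lemma K2conv (q r3 r4 a b : C) :
  b * (q - q^*) = a * ('i * r4 - 'i * r3) <-> a * (r4 - r3) = b * ('i * (q^* - q)).
Proof.
have e1 : b * (q - q^*) = 'i * (b * ('i * (q^* - q))) by rewrite mulrCA ii2 opprB.
have e2 : a * ('i * r4 - 'i * r3) = 'i * (a * (r4 - r3)) by rewrite -mulrBr mulrCA.
rewrite e1 e2; split => [/(mulfI i_neq0) -> // | ->] //.
Qed.

Lemma sq_ge0 (x : C) : x \is Num.real -> 0 <= x ^+ 2.
Proof. by move=> h; rewrite -real_normK // exprn_ge0. Qed.

Lemma gt1 (a b : C) : a \is Num.real -> b \is Num.real -> b != 0 ->
  a ^+ 2 = b ^+ 2 + 1 -> 1 < `|a / b|.
Proof.
move=> ha hb hb0 e.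
rewrite normf_div ltr_pdivlMr ?normr_gt0 // mul1r.
rewrite -(ltr_pXn2r (_ : (0 < 2)%N)) ?nnegrE ?normr_ge0 //.
by rewrite !real_normK // e ltrDl ltr01.
Qed.

Lemma lt1 (a b : C) : a \is Num.real -> b \is Num.real -> b != 0 ->
  b ^+ 2 = a ^+ 2 + 1 -> `|a / b| < 1.
Proof.
move=> ha hb hb0 e.
rewrite normf_div ltr_pdivrMr ?normr_gt0 // mul1r.
rewrite -(ltr_pXn2r (_ : (0 < 2)%N)) ?nnegrE ?normr_ge0 //.
by rewrite !real_normK // e ltrDl ltr01.
Qed.
Ltac fs1 := first [assumption | exact: oner_neq0 | apply: mulf_neq0; fs1 | apply: invr_neq0; fs1].
Ltac fs := repeat split; apply/eqP; fs1.

Lemma build2 (h : C) : h \is Num.real -> 1 < `|h| ->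
  exists al be : C, [/\ al \is Num.real, be \is Num.real, al ^+ 2 - be ^+ 2 = 1,
     2 * al * be != 0 & (al ^+ 2 + be ^+ 2) / (2 * al * be) = h].
Proof.
move=> hr hgt.
have h0 : h != 0 by apply/eqP => e; move: hgt; rewrite e normr0 ltr10.
have hh : 1 < h ^+ 2 by rewrite -real_normK // exprn_egt1.
have hs0 : 0 < sqrtC (h ^+ 2 - 1) by rewrite sqrtC_gt0 subr_gt0.
have hs2 : sqrtC (h ^+ 2 - 1) ^+ 2 = h ^+ 2 - 1 by rewrite sqrtCK.
set s := sqrtC (h ^+ 2 - 1) in hs0 hs2.
have hsr : s \is Num.real := gtr0_real hs0.
have h10 : h ^+ 2 - 1 != 0 by rewrite subr_eq0 (gt_eqF hh).
have ha0 : 0 < `|h| / s by rewrite divr_gt0 // normr_gt0.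
have ha2 : (`|h| / s) ^+ 2 = h ^+ 2 / (h ^+ 2 - 1) by rewrite expr_div_n real_normK // hs2.
set a := `|h| / s in ha0 ha2.
have hab : (a / h) ^+ 2 = a ^+ 2 - 1.
  rewrite expr_div_n ha2. cfold. field. fs.
have har : a \is Num.real := gtr0_real ha0.
have a0 : a != 0 by rewrite gt_eqF.
have two0 : (1 + 1 : C) != 0 by rewrite -mulr2n pnatr_eq0.
have two0' : (2 : C) != 0 by rewrite pnatr_eq0.
have a10 : a + 1 != 0 by rewrite gt_eqF // addr_gt0.
set b := a / h in hab.
have hb0 : b != 0 by rewrite mulf_neq0 // invr_neq0.
have hbr : b \is Num.real by rewrite rpred_div.
have hal0 : 0 < sqrtC ((a + 1) / 2) by rewrite sqrtC_gt0 divr_gt0 // ?addr_gt0 // ltr0n.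
have hal2 : sqrtC ((a + 1) / 2) ^+ 2 = (a + 1) / 2 by rewrite sqrtCK.
set al := sqrtC ((a + 1) / 2) in hal0 hal2.
have al0 : al != 0 by rewrite gt_eqF.
have alr : al \is Num.real := gtr0_real hal0.
have e2 : 2 * al * (b / (2 * al)) = b by cfold; field; fs.
exists al, (b / (2 * al)); split => //.
- by rewrite rpred_div // rpredM // realn.
- rewrite expr_div_n [(2 * al) ^+ 2]exprMn hal2 hab; cfold; field; fs.
- by rewrite e2.
- rewrite e2 expr_div_n [(2 * al) ^+ 2]exprMn hal2 hab /b; cfold; field; fs.
Qed.

Lemma build11 (h : C) : h \is Num.real -> `|h| < 1 ->
  exists al be : C, [/\ al \is Num.real, be \is Num.real, - (2 * al * be) = 1,
     al ^+ 2 + be ^+ 2 != 0 & (al ^+ 2 - be ^+ 2) / (al ^+ 2 + be ^+ 2) = h].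
Proof.
move=> hr hlt.
have hh : h ^+ 2 < 1 by rewrite -real_normK // exprn_ilt1 // normr_ge0.
have hs0 : 0 < sqrtC (1 - h ^+ 2) by rewrite sqrtC_gt0 subr_gt0.
have hs2 : sqrtC (1 - h ^+ 2) ^+ 2 = 1 - h ^+ 2 by rewrite sqrtCK.
set s := sqrtC (1 - h ^+ 2) in hs0 hs2.
have s0 : s != 0 by rewrite gt_eqF.
have h10 : 1 - h ^+ 2 != 0 by rewrite gt_eqF // subr_gt0.
have two0 : (1 + 1 : C) != 0 by rewrite -mulr2n pnatr_eq0.
have two0' : (2 : C) != 0 by rewrite pnatr_eq0.
have hb2 : (s^-1) ^+ 2 = (h / s) ^+ 2 + 1.
  rewrite expr_div_n exprVn hs2; cfold; field; fs.
have hm1 : - 1 < h by move: hlt; rewrite real_ltr_norml // => /andP [].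
have hab0 : 0 < h / s + s^-1.
  have -> : h / s + s^-1 = (h + 1) / s by rewrite mulrDl mul1r.
  rewrite divr_gt0 //.
  by rewrite -[1]opprK subr_gt0.
set a := h / s in hb2 hab0.
set b := s^-1 in hb2 hab0.
have ab0 : a + b != 0 by rewrite gt_eqF.
have hal0 : 0 < sqrtC ((a + b) / 2) by rewrite sqrtC_gt0 divr_gt0 // ltr0n.
have hal2 : sqrtC ((a + b) / 2) ^+ 2 = (a + b) / 2 by rewrite sqrtCK.
set al := sqrtC ((a + b) / 2) in hal0 hal2.
have al0 : al != 0 by rewrite gt_eqF.
have alr : al \is Num.real := gtr0_real hal0.
have eA : al ^+ 2 - (- (2 * al)^-1) ^+ 2 = a.
  rewrite sqrrN exprVn [(2 * al) ^+ 2]exprMn hal2.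
  apply: (@eq_via _ _ ((b ^+ 2 - (a ^+ 2 + 1)) / (2 * (a + b))) 0).
    cfold; field; fs.
  by rewrite hb2 subrr mul0r.
have eB : al ^+ 2 + (- (2 * al)^-1) ^+ 2 = b.
  rewrite sqrrN exprVn [(2 * al) ^+ 2]exprMn hal2.
  apply: (@eq_via _ _ (((a ^+ 2 + 1) - b ^+ 2) / (2 * (a + b))) 0).
    cfold; field; fs.
  by rewrite hb2 subrr mul0r.
have b0 : b != 0 by rewrite invr_neq0.
exists al, (- (2 * al)^-1); split.
- exact: alr.
- by rewrite rpredN rpredV rpredM // realn.
- cfold; field; fs.
- by rewrite eB.
- rewrite eA eB /a /b; cfold; field; fs.
Qed.

Lemma partB (p q r1 r2 r3 r4 : C) :
  r1 \is Num.real -> r2 \is Num.real -> r3 \is Num.real -> r4 \is Num.real ->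
  r1 * r2 + p * p^* = 1 -> q * q^* - 'i * r3 * ('i * r4) = 1 ->
  r1 != r2 -> r3 != r4 ->
  let Phi1 := mx2 r1 p (- p^*) r2 in
  let Phi2 := mx2 q ('i * r3) ('i * r4) (q^*) in
      let h1 := 2 * 'Re p / (r2 - r1) in
      let h2 := 2 * 'Im q / (r4 - r3) in
      ((exists alpha beta : C,
          [/\ alpha \is Num.real, beta \is Num.real, alpha ^+ 2 - beta ^+ 2 = 1,
              inSU2 (invmx (mx2 alpha beta beta alpha) *m Phi1 *m mx2 alpha beta beta alpha) &
              inSU2 (invmx (mx2 alpha beta beta alpha) *m Phi2 *m mx2 alpha beta beta alpha)])
        <-> (h1 = h2 /\ 1 < `|h1|))
      /\
      (forall alpha beta : C,
          alpha \is Num.real -> beta \is Num.real -> alpha ^+ 2 - beta ^+ 2 = 1 ->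
          inSU2 (invmx (mx2 alpha beta beta alpha) *m Phi1 *m mx2 alpha beta beta alpha) ->
          inSU2 (invmx (mx2 alpha beta beta alpha) *m Phi2 *m mx2 alpha beta beta alpha) ->
          (alpha ^+ 2 + beta ^+ 2) / (2 * alpha * beta) = h1)
      /\
      ((exists alpha beta : C,
          [/\ alpha \is Num.real, beta \is Num.real, - (2 * alpha * beta) = 1,
              inSU11 (invmx (mx2 alpha beta alpha (- beta)) *m Phi1 *m mx2 alpha beta alpha (- beta)) &
              inSU11 (invmx (mx2 alpha beta alpha (- beta)) *m Phi2 *m mx2 alpha beta alpha (- beta))])
        <-> (h1 = h2 /\ `|h1| < 1))
      /\
      (forall alpha beta : C,
          alpha \is Num.real -> beta \is Num.real -> - (2 * alpha * beta) = 1 ->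
          inSU11 (invmx (mx2 alpha beta alpha (- beta)) *m Phi1 *m mx2 alpha beta alpha (- beta)) ->
          inSU11 (invmx (mx2 alpha beta alpha (- beta)) *m Phi2 *m mx2 alpha beta alpha (- beta)) ->
          (alpha ^+ 2 - beta ^+ 2) / (alpha ^+ 2 + beta ^+ 2) = h1).
Proof.
move=> hr1 hr2 hr3 hr4 hd1 hd2 n12 n34 Phi1 Phi2 h1 h2.
have dP1 : \det Phi1 = 1.
  rewrite det_mx2; apply: (@eq_via _ _ (r1 * r2 + p * p^*) 1); last exact: hd1.
  cfold; ring.
have dP2 : \det Phi2 = 1 by rewrite det_mx2.
have c3 : ('i * r3)^* = - ('i * r3) by rewrite conjM conjCi (realC hr3) mulNr.
have c4 : ('i * r4)^* = - ('i * r4) by rewrite conjM conjCi (realC hr4) mulNr.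
have d21 : r2 - r1 != 0 by rewrite subr_eq0 eq_sym.
have d43 : r4 - r3 != 0 by rewrite subr_eq0 eq_sym.
have K1raw : forall a b : C,
    Phi1 *m mx2 a b b a *m adj2 Phi1 = mx2 a b b a <-> a * (r2 - r1) = b * (p + p^*).
  by move=> a b; apply: cond1.
have K1iff : forall a b : C, b != 0 ->
    (Phi1 *m mx2 a b b a *m adj2 Phi1 = mx2 a b b a <-> h1 = a / b).
  move=> a b b0; rewrite K1raw /h1 h1E; exact: hK.
have K2iff : forall a b : C, b != 0 ->
    (Phi2 *m mx2 a b b a *m adj2 Phi2 = mx2 a b b a <-> h2 = a / b).
  move=> a b b0; rewrite cond2 // K2conv /h2 h2E; exact: hK.
have h1r : h1 \is Num.real.
  by rewrite /h1 rpred_div ?rpredB ?rpredM ?realn ?Creal_Re.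
have fwd2 : forall al be : C, al \is Num.real -> be \is Num.real -> al ^+ 2 - be ^+ 2 = 1 ->
    inSU2 (invmx (mx2 al be be al) *m Phi1 *m mx2 al be be al) ->
    inSU2 (invmx (mx2 al be be al) *m Phi2 *m mx2 al be be al) ->
    [/\ 2 * al * be != 0, h1 = (al ^+ 2 + be ^+ 2) / (2 * al * be),
        h2 = (al ^+ 2 + be ^+ 2) / (2 * al * be) & 1 < `|h1| ].
  move=> al be alr ber e s1 s2.
  have R1 := (su2_iff _ _ _ alr ber e dP1).1 s1.
  have R2 := (su2_iff _ _ _ alr ber e dP2).1 s2.
  have ar : al ^+ 2 + be ^+ 2 \is Num.real by rewrite rpredD ?rpredX.
  have br : 2 * al * be \is Num.real by rewrite !rpredM ?realn.
  have hab2 : (al ^+ 2 + be ^+ 2) ^+ 2 = (2 * al * be) ^+ 2 + 1.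
    apply: (@eq_via _ _ ((al ^+ 2 - be ^+ 2) ^+ 2) 1); first by cfold; ring.
    by rewrite e expr1n.
  have b0 : 2 * al * be != 0.
    apply/eqP => b0.
    have := (K1raw _ _).1 R1; rewrite b0 mul0r => /eqP; rewrite mulf_eq0 (negbTE d21) orbF.
    move=> /eqP a0; move: hab2; rewrite a0 b0 expr0n /= add0r => /eqP.
    by rewrite eq_sym oner_eq0.
  have e1 := (K1iff _ _ b0).1 R1.
  have e2 := (K2iff _ _ b0).1 R2.
  split => //; rewrite e1; exact: gt1.
have fwd11 : forall al be : C, al \is Num.real -> be \is Num.real -> - (2 * al * be) = 1 ->
    inSU11 (invmx (mx2 al be al (- be)) *m Phi1 *m mx2 al be al (- be)) ->
    inSU11 (invmx (mx2 al be al (- be)) *m Phi2 *m mx2 al be al (- be)) ->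
    [/\ al ^+ 2 + be ^+ 2 != 0, h1 = (al ^+ 2 - be ^+ 2) / (al ^+ 2 + be ^+ 2),
        h2 = (al ^+ 2 - be ^+ 2) / (al ^+ 2 + be ^+ 2) & `|h1| < 1 ].
  move=> al be alr ber e s1 s2.
  have R1 := (su11_iff _ _ _ alr ber e dP1).1 s1.
  have R2 := (su11_iff _ _ _ alr ber e dP2).1 s2.
  have ar : al ^+ 2 - be ^+ 2 \is Num.real by rewrite rpredB ?rpredX.
  have br : al ^+ 2 + be ^+ 2 \is Num.real by rewrite rpredD ?rpredX.
  have hab2 : (al ^+ 2 + be ^+ 2) ^+ 2 = (al ^+ 2 - be ^+ 2) ^+ 2 + 1.
    apply: (@eq_via _ _ ((- (2 * al * be)) ^+ 2) 1); first by cfold; ring.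
    by rewrite e expr1n.
  have b0 : al ^+ 2 + be ^+ 2 != 0.
    apply/eqP => b0.
    have := @sq_ge0 _ ar.
    have -> : (al ^+ 2 - be ^+ 2) ^+ 2 = -1.
      apply/eqP; rewrite -subr_eq0 opprK -hab2 b0 expr0n //.
    by rewrite oppr_ge0 ler10.
  have e1 := (K1iff _ _ b0).1 R1.
  have e2 := (K2iff _ _ b0).1 R2.
  split => //; rewrite e1; exact: lt1.
split; [|split; [|split]].
- split.
    case=> al [be [alr ber e s1 s2]].
    by case: (fwd2 al be alr ber e s1 s2) => _ -> ->.
  case=> e12 hgt.
  have [al [be [alr ber e b0 er]]] := build2 _ h1r hgt.
  exists al, be; split => //.
    apply/(su2_iff _ _ _ alr ber e dP1); apply/(K1iff _ _ b0); by rewrite er.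
  apply/(su2_iff _ _ _ alr ber e dP2); apply/(K2iff _ _ b0); by rewrite -e12 er.
- move=> al be alr ber e s1 s2.
  by case: (fwd2 al be alr ber e s1 s2) => _ ->.
- split.
    case=> al [be [alr ber e s1 s2]].
    by case: (fwd11 al be alr ber e s1 s2) => _ -> ->.
  case=> e12 hgt.
  have [al [be [alr ber e b0 er]]] := build11 _ h1r hgt.
  exists al, be; split => //.
    apply/(su11_iff _ _ _ alr ber e dP1); apply/(K1iff _ _ b0); by rewrite er.
  apply/(su11_iff _ _ _ alr ber e dP2); apply/(K2iff _ _ b0); by rewrite -e12 er.
- move=> al be alr ber e s1 s2.
  by case: (fwd11 al be alr ber e s1 s2) => _ ->.
Qed.
End CF.

Theorem mainTheorem3 (C : numClosedFieldType) (k : nat) (hk : (1 <= k)%N)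
  (A1 B1 C1 D1 A2 B2 C2 D2 : C)
  (hdet1 : A1 * D1 - B1 * C1 = 1) (hdet2 : A2 * D2 - B2 * C2 = 1) :
  let Phi1 := Phi1 k A1 B1 C1 D1 in
  let Phi2 := Phi2 A2 B2 C2 D2 in
  (* (a) *)
  (exists (p q r1 r2 r3 r4 : C),
      [/\ r1 \is Num.real, r2 \is Num.real, r3 \is Num.real & r4 \is Num.real] /\
      Phi1 = mx2 r1 p (- p^*) r2 /\
      Phi2 = mx2 q ('i * r3) ('i * r4) (q^*))
  /\
  (* (b) *)
  (forall (p q r1 r2 r3 r4 : C),
      r1 \is Num.real -> r2 \is Num.real -> r3 \is Num.real -> r4 \is Num.real ->
      Phi1 = mx2 r1 p (- p^*) r2 ->
      Phi2 = mx2 q ('i * r3) ('i * r4) (q^*) ->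
      p != 0 -> q != 0 -> r1 != r2 -> r3 != r4 ->
      let h1 := 2 * 'Re p / (r2 - r1) in
      let h2 := 2 * 'Im q / (r4 - r3) in
      ((exists alpha beta : C,
          [/\ alpha \is Num.real, beta \is Num.real, alpha ^+ 2 - beta ^+ 2 = 1,
              inSU2 (invmx (mx2 alpha beta beta alpha) *m Phi1 *m mx2 alpha beta beta alpha) &
              inSU2 (invmx (mx2 alpha beta beta alpha) *m Phi2 *m mx2 alpha beta beta alpha)])
        <-> (h1 = h2 /\ 1 < `|h1|))
      /\
      (forall alpha beta : C,
          alpha \is Num.real -> beta \is Num.real -> alpha ^+ 2 - beta ^+ 2 = 1 ->
          inSU2 (invmx (mx2 alpha beta beta alpha) *m Phi1 *m mx2 alpha beta beta alpha) ->
          inSU2 (invmx (mx2 alpha beta beta alpha) *m Phi2 *m mx2 alpha beta beta alpha) ->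
          (alpha ^+ 2 + beta ^+ 2) / (2 * alpha * beta) = h1)
      /\
      ((exists alpha beta : C,
          [/\ alpha \is Num.real, beta \is Num.real, - (2 * alpha * beta) = 1,
              inSU11 (invmx (mx2 alpha beta alpha (- beta)) *m Phi1 *m mx2 alpha beta alpha (- beta)) &
              inSU11 (invmx (mx2 alpha beta alpha (- beta)) *m Phi2 *m mx2 alpha beta alpha (- beta))])
        <-> (h1 = h2 /\ `|h1| < 1))
      /\
      (forall alpha beta : C,
          alpha \is Num.real -> beta \is Num.real -> - (2 * alpha * beta) = 1 ->
          inSU11 (invmx (mx2 alpha beta alpha (- beta)) *m Phi1 *m mx2 alpha beta alpha (- beta)) ->
          inSU11 (invmx (mx2 alpha beta alpha (- beta)) *m Phi2 *m mx2 alpha beta alpha (- beta)) ->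
          (alpha ^+ 2 - beta ^+ 2) / (alpha ^+ 2 + beta ^+ 2) = h1)).
Proof.
move=> P1 P2; split.
  have [p [r1 [r2 [h1 h2 e1]]]] := phi1_form C k A1 B1 C1 D1.
  have [q [r3 [r4 [h3 h4 e2]]]] := phi2_form C A2 B2 C2 D2.
  by exists p, q, r1, r2, r3, r4; split; [split | split].
move=> p q r1 r2 r3 r4 hr1 hr2 hr3 hr4 e1 e2 _ _ n12 n34.
have d1 : \det P1 = 1 := det_phi1 C k _ _ _ _ hdet1.
have d2 : \det P2 = 1 := det_phi2 C _ _ _ _ hdet2.
rewrite e1 det_mx2 in d1; rewrite e2 det_mx2 in d2.
have hd1 : r1 * r2 + p * p^* = 1 by rewrite -d1 mulrN opprK.
rewrite e1 e2.
exact: (partB C _ _ _ _ _ _ hr1 hr2 hr3 hr4 hd1 d2 n12 n34).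
Qed.
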